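(* Let $p$ be an odd prime, $v$ an integer with $1<v<p-1$ such that $g=v$ is a primitive root modulo $p$, and $t\ge1$. For $z\in\{0,\dots,v-1\}^t$ let $\lambda(z)=\#\{x\in\{0,\dots,p-2\}:\ (v^{x+\iota}\,\%\,p)\,\%\,v=z(\iota)\ \forall\,0\le\iota<t\}$. Then $\lambda(z)>0$ for all $z\in\{0,\dots,v-1\}^t$ if and only if $p\ge v^t+1$.
   Context: $x\,\%\,m$ denotes the least nonnegative remainder of the integer $x$ modulo $m$. *)

(* Defs.v *)
From mathcomp Require Import all_boot all_order all_algebra.
Set Implicit Arguments. Unset Strict Implicit. Unset Printing Implicit Defensive.
Import GRing.Theory.

Definition primitive_root_mod (p g : nat) : Prop :=
  primitive_root_of_unity p.-1 (g%:R : 'F_p).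

Definition lambda (p v t : nat) (z : {ffun 'I_t -> 'I_v}) : nat :=
  #|[set x : 'I_p.-1 | [forall i : 'I_t, (v ^ (x + i) %% p) %% v == z i]]|.
Arguments lambda p v t z : clear implicits.

(* Main.v *)
Require Import Defs.
From mathcomp Require Import all_boot all_order all_algebra.
From mathcomp Require Import zify.

Fixpoint Mf (v : nat) (c : nat -> nat) (i : nat) : nat :=
  if i is j.+1 then Mf v c j * v + c j.+1 else 0.

Lemma inv_mod p v : prime p -> 1 < v -> v < p -> exists u, (p * u) %% v = 1.
Proof.
move=> pp v1 vp.
have p0 : 0 < p by apply: prime_gt0.
case: (egcdnP v p0) => km kn E _.
have cop : coprime p v.
  by rewrite prime_coprime // gtnNdvd //; lia.
move/eqP: cop => g1; rewrite g1 in E.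
exists km; rewrite mulnC E modnMDl modn_small //.
Qed.

Lemma addmod_fix l d v : 0 < v -> d < v -> (l + (d + v - l %% v) %% v) %% v = d.
Proof.
move=> v0 dv; rewrite modnDmr.
have h1 := ltn_pmod l v0; have h2 := leq_mod l v.
have -> : l + (d + v - l %% v) = (l - l %% v) + (d + v) by lia.
have -> : l - l %% v = l %/ v * v by rewrite {1}(divn_eq l v) addnK.
by rewrite modnMDl -modnDmr modnn addn0 modn_small.
Qed.

Lemma core p v n (d : nat -> nat) : prime p -> 1 < v -> v < p -> v ^ n.+1 < p ->
  (forall i, d i < v) ->
  exists a, 0 < a < p /\ forall i, i <= n -> (a * v ^ i %% p) %% v = d i.
Proof.
move=> pp v1 vp vnp dv.
have p0 : 0 < p by apply: prime_gt0.
have [u Hu] := inv_mod _ _ pp v1 vp.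
pose c i := (u * (v - d i)) %% v.
have cv : forall i, c i < v by move=> i; rewrite ltn_mod; lia.
have cd : forall i, (p * c i + d i) %% v = 0.
  move=> i; rewrite /c -modnDml modnMmr mulnA -modnMml Hu mul1n modnDml.
  have -> : v - d i + d i = v by have := dv i; lia.
  by rewrite modnn.
have Mlt : forall i, Mf v c i < v ^ i.
  elim=> [|i IH] /=; first by [].
  rewrite expnS.
  have := cv i.+1. nia.
set W := v ^ n.
have W0 : 0 < W by rewrite expn_gt0; lia.
set M := Mf v c n.
have [lo [hlo1 h1]] : exists lo, p * M <= lo * W /\ lo * W <= p * M + W.-1.
  exists ((p * M + W.-1) %/ W).
  have h1 := leq_divM (p * M + W.-1) W.
  have h2 := ltn_ceil (p * M + W.-1) W0.
  split=> //; nia.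
have [lo' [l1 [l2 hlo2]]] : exists lo', lo <= lo' /\ 1 <= lo' /\ lo' * W <= p * M + W.
  case: (leqP lo 0) => h.
    exists 1; have -> : lo = 0 by lia.
    lia.
  exists lo; lia.
have [a [av [ale age]]] : exists a, a %% v = d 0 /\ a <= lo' + v.-1 /\ lo' <= a.
  exists (lo' + ((d 0 + v - lo' %% v) %% v)); split; first by apply: addmod_fix (dv 0); lia.
  have := ltn_pmod (d 0 + v - lo' %% v) (ltnW v1); lia.
have vW : v * W < p by rewrite /W -expnS.
have aW1 : p * M <= a * W.
  apply: leq_trans hlo1 (leq_mul _ (leqnn W)); lia.
have aW2 : a * W < p * M + p.
  have := leq_mul ale (leqnn W); rewrite mulnDl.
  have : v.-1 * W + W = v * W by rewrite -mulSnr prednK //; lia.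
  lia.
have aWM : a * W %/ p = M.
  have -> : a * W = M * p + (a * W - p * M) by lia.
  rewrite divnMDl // divn_small; [lia | lia].
have MW : M < W := Mlt n.
have alt : a < p.
  have : a * W < p * W.
    apply: (leq_trans aW2); rewrite addnC -mulnS leq_mul2l MW orbT //.
  by rewrite ltn_pmul2r.
have apos : 0 < a by lia.
exists a; split; first by rewrite apos alt.
have Mi : forall k, k <= n -> a * v ^ (n - k) %/ p = Mf v c (n - k).
  elim=> [|k IH] kn; first by rewrite subn0.
  have IH' := IH (ltnW kn).
  have e : n - k = (n - k.+1).+1 by lia.
  rewrite e in IH'.
  move: IH'; set j := n - k.+1 => /=; rewrite expnS => IH'.
  rewrite -(@divnMr v (a * v ^ j) p) ?divnMA; last by lia.
  rewrite -mulnA (mulnC (v ^ j) v) IH' divnMDl; last by lia.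
  by rewrite divn_small ?addn0.
case=> [|j] jn.
  by rewrite expn0 muln1 (modn_small alt) av.
have Hj := Mi (n - j.+1) (leq_subr _ _).
have e : n - (n - j.+1) = j.+1 by lia.
rewrite e /= in Hj.
have E := divn_eq (a * v ^ j.+1) p.
rewrite Hj in E.
move: E; set r := a * v ^ j.+1 %% p => E.
have E2 : a * v ^ j.+1 = (Mf v c j * p) * v + (p * c j.+1 + r) by rewrite E; lia.
have H0 : (p * c j.+1 + r) %% v = 0.
  have : (a * v ^ j.+1) %% v = 0 by rewrite expnSr mulnA modnMl.
  by rewrite E2 modnMDl.
have H1 : r = d j.+1 %[mod v].
  apply/eqP; rewrite -(eqn_modDr (p * c j.+1)) addnC (addnC (d _)) H0 cd //.
by rewrite H1 modn_small.
Qed.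
Import GRing.Theory.

Lemma surj_pow p v a : prime p -> primitive_root_mod p v -> 0 < a < p ->
  exists x : 'I_p.-1, v ^ x %% p = a.
Proof.
move=> pp pr /andP[a0 ap].
pose f (x : 'I_p.-1) := ((v%:R : 'F_p) ^+ x)%R.
have finj : injective f.
  move=> x y /eqP; rewrite /f (eq_prim_root_expr pr) => /eqP.
  by rewrite !modn_small // => /val_inj.
have sub : [set f x | x in 'I_p.-1] \subset [set y : 'F_p | y != 0%R].
  apply/subsetP => y /imsetP [x _ ->]; rewrite inE expf_eq0 negb_and.
  apply/orP; right; apply/eqP => v0.
  have := prim_expr_order pr; rewrite v0 expr0n.
  have -> : (p.-1 == 0) = false by have := prime_gt1 pp; lia.
  by move/eqP; rewrite eq_sym oner_eq0.
have cardEq : #|[set f x | x in 'I_p.-1]| = #|[set y : 'F_p | y != 0%R]|.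
  have -> : [set y : 'F_p | y != 0%R] = [set~ 0%R] by apply/setP=> y; rewrite !inE.
  by rewrite card_imset // card_ord cardsC1 card_Fp.
have := subset_cardP cardEq sub => /(_ (a%:R)%R).
rewrite !inE.
have -> : ((a%:R : 'F_p) != 0)%R.
  apply/eqP => /(congr1 val); rewrite /= val_Fp_nat // modn_small //; lia.
move=> /imsetP [x _ fx]; exists x.
have := congr1 val fx; rewrite /f -natrX /= !val_Fp_nat // modn_small //.
Qed.

Theorem corollary7 (p v t : nat) :
  prime p -> odd p -> 1 < v -> v < p.-1 -> primitive_root_mod p v -> 1 <= t ->
  (forall z : {ffun 'I_t -> 'I_v}, 0 < lambda p v t z) <-> v ^ t + 1 <= p.
Proof.
move=> pp _ v1 vp pr t1.
have p2 := prime_gt1 pp.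
split.
  move=> H.
  have p0 : 0 < p.-1 by lia.
  pose x0 : 'I_p.-1 := Ordinal p0.
  pose S (z : {ffun 'I_t -> 'I_v}) :=
    [set x : 'I_p.-1 | [forall i : 'I_t, (v ^ (x + i) %% p) %% v == z i]].
  pose g z := odflt x0 [pick x in S z].
  have gS : forall z, g z \in S z.
    move=> z; rewrite /g; case: pickP => [x //|] /= h0.
    have := H z; rewrite /lambda -/(S z).
    by move/card_gt0P => [y]; rewrite (h0 y).
  have ginj : injective g.
    move=> z1 z2 e; apply/ffunP => i; apply/val_inj.
    have := gS z1; have := gS z2; rewrite e !inE => /forallP/(_ i)/eqP h2 /forallP/(_ i)/eqP h1.
    exact: (etrans (esym h1) h2).
  have := leq_card _ ginj; rewrite card_ffun !card_ord; lia.
move=> hp z.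
pose d i := oapp (fun j : 'I_t => val (z j)) 0 (insub i).
have dv : forall i, d i < v.
  by move=> i; rewrite /d; case: insub => [j|] /=; [apply: ltn_ord | lia].
have vt : v ^ (t.-1).+1 < p by rewrite prednK //; lia.
have [a [ha hd]] := core _ _ _ d pp v1 (ltac:(lia) : v < p) vt dv.
have [x hx] := surj_pow _ _ _ pp pr ha.
apply/card_gt0P; exists x; rewrite inE; apply/forallP => i.
rewrite expnD -modnMml hx hd; last by have := ltn_ord i; lia.
by rewrite /d valK.
Qed.
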